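(* For every $p\in\mathbb Z$ and every $\tau\in\{0,\dots,\beta(|p|)-1\}$, $$\|D_{p,\tau}\|_{L^2(I_{p,\tau})}=\Big(\int_{I_{p,\tau}}|D_{p,\tau}(t)|^2\,dt\Big)^{1/2}>0.85,$$ where $I_{p,\tau}=\Big[\frac{\tau}{\beta(|p|)}-\frac{1}{2\beta(|p|)},\ \frac{\tau}{\beta(|p|)}+\frac{1}{2\beta(|p|)}\Big]$, understood as an interval on the circle $\mathbb R/\mathbb Z$ (in particular $I_{p,0}=[0,\frac{1}{2\beta(|p|)})\cup(1-\frac{1}{2\beta(|p|)},1]$). Since $\|D_{p,\tau}\|_{L^2([0,1])}=1$, the part of the $L^2$-norm of $D_{p,\tau}$ outside $I_{p,\tau}$ is correspondingly small.
   Context: The functions $D_{p,\tau}$ are 1-periodic. Define $\nu,\beta$ on $\mathbb N$ by $\nu(0)=0,\ \beta(0)=1$; $\nu(1)=1,\ \beta(1)=1$; for $p\ge 2$, $\nu(p)=2^{p-1}+2^{p-2}$, $\beta(p)=2^{p-1}$; set $\nu(-p)=-\nu(p)$, $\beta(-p)=\beta(p)$. The DOST functions are: $D_{0,0}(t)=1$; $D_{1,0}(t)=e^{2\pi i t}$; for $p\ge 2$, $\tau=0,\dots,\beta(p)-1$, $D_{p,\tau}(t)=\beta(p)^{-1/2}\sum_{j=0}^{\beta(p)-1}e^{2\pi i(\beta(p)+j)(t-\tau/\beta(p))}$; and for $p<0$, $D_{p,\tau}=\overline{D_{-p,\tau}}$. *)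

(* Defs.v *)
From Stdlib Require Import Reals ZArith.
From Coquelicot Require Import Coquelicot.
Open Scope R_scope.

Definition beta_nat (n : nat) : nat :=
  match n with
  | O => 1%nat
  | S O => 1%nat
  | S m => (2 ^ m)%nat
  end.

Definition beta (p : Z) : nat := beta_nat (Z.abs_nat p).

Definition e2pi (x : R) : C := (cos (2 * PI * x), sin (2 * PI * x)).

Definition D_nat (p : nat) (tau : nat) (t : R) : C :=
  match p with
  | O => 1%C
  | S O => e2pi t
  | _ =>
      let b := INR (beta_nat p) in
      Cmult (RtoC (/ sqrt b))
        (sum_n (G := C_AbelianMonoid)
           (fun j : nat => e2pi ((b + INR j) * (t - INR tau / b)))
           (beta_nat p - 1))
  end.

Definition DOST (p : Z) (tau : nat) (t : R) : C :=
  if (p <? 0)%Z then Cconj (D_nat (Z.abs_nat p) tau t)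
  else D_nat (Z.abs_nat p) tau t.

(* Main.v *)
Require Import Defs.
From Stdlib Require Import Reals Lra Lia FunctionalExtensionality ZArith.
From Coquelicot Require Import Coquelicot.
From Coquelicot Require Import Coquelicot.
Open Scope R_scope.
Lemma pi_sq : PI^2 <= 9.9.
Proof.
  destruct (PI_2_3_7_ineq 1) as [_ H].
  unfold PI_2_3_7_tg, tg_alt, Ratan_seq in H. simpl in H.
  assert (PI <= 3.145) by lra.
  assert (0 < PI) by apply PI_RGT_0. nra.
Qed.
Lemma cos_lb x : - PI/2 <= x <= PI/2 -> 1 - x^2/2 <= cos x.
Proof. intros [H1 H2]. destruct (cos_bound x 0 H1 H2) as [H _].
  unfold cos_approx, cos_term in H. simpl in H. lra. Qed.
Lemma fst_sum (f : nat -> C) n : fst (sum_n (G:=C_AbelianMonoid) f n) = sum_f_R0 (fun j => fst (f j)) n.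
Proof. induction n; [rewrite sum_O; reflexivity|]. rewrite sum_Sn. simpl. rewrite <- IHn. reflexivity. Qed.
Lemma snd_sum (f : nat -> C) n : snd (sum_n (G:=C_AbelianMonoid) f n) = sum_f_R0 (fun j => snd (f j)) n.
Proof. induction n; [rewrite sum_O; reflexivity|]. rewrite sum_Sn. simpl. rewrite <- IHn. reflexivity. Qed.
Lemma sum_lin (u v : R) (a c : nat -> R) N :
  sum_f_R0 (fun j => u * a j + v * c j) N = u * sum_f_R0 a N + v * sum_f_R0 c N.
Proof. induction N; simpl; [ring|]. rewrite IHN. ring. Qed.
Lemma sum_sq (q c : R) N : sum_f_R0 (fun j => 1 - (q * (INR j - c))^2/2) N
  = (INR N + 1) - q^2/2 * ((INR N + 1)*c^2 - c * INR N * (INR N + 1) + INR N * (INR N + 1) * (2 * INR N + 1)/6).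
Proof. induction N; [simpl; field|]. rewrite tech5, IHN, S_INR. field. Qed.
Lemma cont_sum (g : nat -> R -> R) N x : (forall j, continuous (g j) x) ->
  continuous (fun t => sum_f_R0 (fun j => g j t) N) x.
Proof. intros H. induction N; simpl; [apply H|]. apply (continuous_plus (fun t => sum_f_R0 (fun j => g j t) N) (g (S N))); auto. Qed.
Lemma key (B : nat) (s : R) : (2 <= B)%nat -> Rabs s <= / (2 * INR B) ->
  let b := INR B in
  b - PI^2 * b^3 * s^2 / 3 <=
  / b * ((sum_f_R0 (fun j => cos (2*PI*((b + INR j) * s))) (B-1))^2
       + (sum_f_R0 (fun j => sin (2*PI*((b + INR j) * s))) (B-1))^2).
Proof.
  intros HB Hs b.
  assert (Hb : 2 <= b) by (unfold b; apply (le_INR 2); exact HB).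
  assert (HN : INR (B - 1) = b - 1) by (unfold b; rewrite minus_INR by lia; simpl; ring).
  set (Nn := (B - 1)%nat) in *.
  set (c := (b - 1) / 2).
  set (th := 2*PI*((b + c)*s)).
  set (A := sum_f_R0 (fun j => cos (2*PI*((b + INR j) * s))) Nn).
  set (Sm := sum_f_R0 (fun j => sin (2*PI*((b + INR j) * s))) Nn).
  set (K := sum_f_R0 (fun j => cos (2*PI*((INR j - c) * s))) Nn).
  assert (HK : K = cos th * A + sin th * Sm).
  { unfold K, A, Sm. rewrite <- sum_lin. apply sum_eq. intros j _.
    replace (2*PI*((INR j - c) * s)) with (2*PI*((b + INR j) * s) - th) by (unfold th; ring).
    rewrite cos_minus. ring. }
  assert (Hpi := pi_sq). assert (Hpi0 := PI_RGT_0).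
  assert (Hs' : - / (2*b) <= s <= / (2*b)) by (apply Rabs_le_between; exact Hs).
  assert (Hbinv : / (2*b) * (2*b) = 1) by (field; lra).
  assert (HK2 : sum_f_R0 (fun j => 1 - (2*PI*s * (INR j - c))^2/2) Nn <= K).
  { apply sum_Rle. intros j Hj. 
    replace (2*PI*((INR j - c) * s)) with (2*PI*s*(INR j - c)) by ring.
    apply cos_lb.
    assert (Hj' : 0 <= INR j <= b - 1) by (split; [apply pos_INR| rewrite <- HN; apply le_INR; exact Hj]).
    assert (Hjc : Rabs (INR j - c) <= c) by (apply Rabs_le; unfold c in *; lra).
    assert (Habs : Rabs (s * (INR j - c)) <= / (2*b) * c).
    { rewrite Rabs_mult. apply Rmult_le_compat; try apply Rabs_pos; auto. }
    assert (Hc : / (2*b) * c <= / 4).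
    { replace (/ (2*b) * c) with (/4 - /(4*b)) by (unfold c; field; lra).
      assert (0 < /(4*b)) by (apply Rinv_0_lt_compat; lra). lra. }
    apply Rabs_le_between in Habs.
    split; nra. }
  rewrite sum_sq, HN in HK2.
  set (y := PI^2 * s^2 * b^2).
  assert (Hy0 : 0 <= y) by (unfold y; nra).
  assert (Hsb : s^2 * b^2 <= /4).
  { assert (Habs : Rabs (s*b) <= /2).
    { rewrite Rabs_mult, (Rabs_right b) by lra.
      apply Rmult_le_reg_r with (2*b); [lra|]. 
      replace (Rabs s * b * (2*b)) with (Rabs s * (2*b) * b) by ring.
      apply Rle_trans with (/ (2*b) * (2*b) * b). apply Rmult_le_compat_r; [lra|]. apply Rmult_le_compat_r; [lra|exact Hs].
      rewrite Hbinv. lra. }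
    apply Rabs_le_between in Habs. nra. }
  assert (Hy1 : y <= 5/2) by (unfold y; nra).
  assert (HK3 : b * (1 - y/6) <= K).
  { eapply Rle_trans; [|exact HK2]. unfold y, c.
    assert (0 <= PI^2 * s^2 * b) by (apply Rmult_le_pos; [nra|lra]).
    replace (b - 1 + 1) with b by ring. field_simplify. nra. }
  assert (HCS : K^2 <= A^2 + Sm^2).
  { rewrite HK. assert (Ht := sin2_cos2 th). unfold Rsqr in Ht.
    assert (0 <= (sin th * A - cos th * Sm)^2) by apply pow2_ge_0. nra. }
  assert (Hpos : 0 <= b * (1 - y/6)) by nra.
  assert (Hsq : (b * (1 - y/6))^2 <= A^2 + Sm^2) by nra.
  apply Rle_trans with (/b * (b*(1-y/6))^2).
  - replace (/b * (b*(1-y/6))^2) with (b * (1 - y/6)^2) by (field; lra).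
    replace (b - PI^2 * b^3 * s^2 / 3) with (b - b*y/3) by (unfold y; field).
    assert (0 <= b * y^2) by (apply Rmult_le_pos; [lra| apply pow2_ge_0]). nra.
  - apply Rmult_le_compat_l; [left; apply Rinv_0_lt_compat; lra| exact Hsq].
Qed.

Lemma Cmod_D (B tau : nat) (t : R) : (2 <= B)%nat -> let b := INR B in
  Cmod (Cmult (RtoC (/ sqrt b)) (sum_n (G:=C_AbelianMonoid)
     (fun j => e2pi ((b + INR j) * (t - INR tau / b))) (B - 1))) ^ 2
  = / b * ((sum_f_R0 (fun j => cos (2*PI*((b + INR j) * (t - INR tau / b)))) (B-1))^2
       + (sum_f_R0 (fun j => sin (2*PI*((b + INR j) * (t - INR tau / b)))) (B-1))^2).
Proof.
  intros HB b.
  assert (Hb : 2 <= b) by (unfold b; apply (le_INR 2); exact HB).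
  rewrite Cmod_mult, Cmod_R, Rpow_mult_distr, Cmod2_alt, pow2_abs, pow_inv, pow2_sqrt by lra.
  unfold Re, Im. rewrite fst_sum, snd_sum. reflexivity.
Qed.

Lemma main_case (B tau : nat) : (2 <= B)%nat -> (tau < B)%nat -> let b := INR B in
  sqrt (RInt (fun t => Cmod (Cmult (RtoC (/ sqrt b)) (sum_n (G:=C_AbelianMonoid)
     (fun j => e2pi ((b + INR j) * (t - INR tau / b))) (B - 1))) ^ 2)
     (INR tau / b - 1 / (2 * b)) (INR tau / b + 1 / (2 * b))) > 0.85.
Proof.
  intros HB Htau b.
  assert (Hb : 2 <= b) by (unfold b; apply (le_INR 2); exact HB).
  set (u := INR tau / b).
  set (g := fun t => / b * ((sum_f_R0 (fun j => cos (2*PI*((b + INR j) * (t - u)))) (B-1))^2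
       + (sum_f_R0 (fun j => sin (2*PI*((b + INR j) * (t - u)))) (B-1))^2)).
  set (L := fun t => b - PI^2 * b^3 * (t - u)^2 / 3).
  rewrite (RInt_ext _ g).
  2:{ intros x _. unfold g, u. apply Cmod_D; exact HB. }
  assert (HL : is_RInt L (u - 1/(2*b)) (u + 1/(2*b)) (1 - PI^2/36)).
  { replace (1 - PI^2/36) with
      (minus ((fun t => b * t - PI^2 * b^3 * (t - u)^3 / 9) (u + 1/(2*b)))
             ((fun t => b * t - PI^2 * b^3 * (t - u)^3 / 9) (u - 1/(2*b)))).
    - apply (is_RInt_derive (fun t => b * t - PI^2 * b^3 * (t - u)^3 / 9) L).
      + intros x _. unfold L. auto_derive; auto. field.
      + intros x _. unfold L. apply (ex_derive_continuous (K:=R_AbsRing) (V:=R_NormedModule)). auto_derive. auto.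
    - unfold minus, plus, opp. simpl. field. lra. }
  assert (Hg : ex_RInt g (u - 1/(2*b)) (u + 1/(2*b))).
  { apply (ex_RInt_continuous (V:=R_CompleteNormedModule)). intros z _. unfold g.
    apply (continuous_mult (K:=R_AbsRing) (fun _ => / b)).
    - apply continuous_const.
    - apply (continuous_plus (V:=R_NormedModule)).
      + apply (continuous_comp (fun t => sum_f_R0 (fun j => cos (2*PI*((b + INR j) * (t - u)))) (B-1)) (fun v => v^2)).
        * apply cont_sum. intros j. apply (ex_derive_continuous (K:=R_AbsRing) (V:=R_NormedModule)). auto_derive. auto.
        * apply (ex_derive_continuous (K:=R_AbsRing) (V:=R_NormedModule)). auto_derive. auto.
      + apply (continuous_comp (fun t => sum_f_R0 (fun j => sin (2*PI*((b + INR j) * (t - u)))) (B-1)) (fun v => v^2)).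
        * apply cont_sum. intros j. apply (ex_derive_continuous (K:=R_AbsRing) (V:=R_NormedModule)). auto_derive. auto.
        * apply (ex_derive_continuous (K:=R_AbsRing) (V:=R_NormedModule)). auto_derive. auto. }
  assert (Hle : 1 - PI^2/36 <= RInt g (u - 1/(2*b)) (u + 1/(2*b))).
  { rewrite <- (is_RInt_unique _ _ _ _ HL).
    apply RInt_le.
    - assert (0 < 1/(2*b)) by (apply Rdiv_lt_0_compat; lra). lra.
    - exists (1 - PI^2/36). exact HL.
    - exact Hg.
    - intros x Hx. unfold L, g.
      assert (Hs : Rabs (x - u) <= / (2 * INR B)).
      { fold b. apply Rabs_le. unfold Rdiv in Hx. lra. }
      pose proof (key B (x - u) HB Hs) as K. simpl in K. exact K. }
  assert (Hpi := pi_sq).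
  unfold Rgt. apply Rlt_le_trans with (sqrt (1 - PI^2/36)).
  - rewrite <- (sqrt_pow2 0.85) by lra. apply sqrt_lt_1_alt. split; [nra|]. lra.
  - apply sqrt_le_1_alt. exact Hle.
Qed.

Theorem proposition3p4 (p : Z) (tau : nat) :
  (tau < beta p)%nat ->
  let b := INR (beta p) in
  sqrt (RInt (fun t => (Cmod (DOST p tau t)) ^ 2)
              (INR tau / b - 1 / (2 * b)) (INR tau / b + 1 / (2 * b)))
  > 0.85.
Proof.
  intros H b.
  replace (fun t => (Cmod (DOST p tau t)) ^ 2) with (fun t => (Cmod (D_nat (Z.abs_nat p) tau t)) ^ 2).
  2:{ apply functional_extensionality. intros t. unfold DOST.
      destruct (p <? 0)%Z; [rewrite Cmod_conj|]; reflexivity. }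
  unfold b, beta in *. clear b.
  destruct (Z.abs_nat p) as [|[|m]].
  - simpl in H. assert (tau = 0%nat) by lia. subst tau.
    rewrite (RInt_ext _ (fun _ => 1)).
    2:{ intros x _. change (Cmod 1 ^ 2 = 1). rewrite Cmod_R, Rabs_R1. ring. }
    rewrite RInt_const. unfold scal. simpl. unfold mult. simpl.
    replace ((0 / 1 + 1 / (2 * 1) - (0 / 1 - 1 / (2 * 1))) * 1) with 1 by field.
    rewrite sqrt_1. lra.
  - simpl in H. assert (tau = 0%nat) by lia. subst tau. simpl.
    rewrite (RInt_ext _ (fun _ => 1)).
    2:{ intros x _. change (Cmod (e2pi x) ^ 2 = 1). rewrite Cmod2_alt. unfold e2pi, Re, Im. simpl fst. simpl snd.
        rewrite <- (sin2_cos2 (2 * PI * x)). unfold Rsqr. ring. }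
    rewrite RInt_const. unfold scal. simpl. unfold mult. simpl.
    replace ((0 / 1 + 1 / (2 * 1) - (0 / 1 - 1 / (2 * 1))) * 1) with 1 by field.
    rewrite sqrt_1. lra.
  - assert (HB : (2 <= beta_nat (S (S m)))%nat).
    { simpl beta_nat. pose proof (Nat.pow_le_mono_r 2 1 (S m)). simpl in *. lia. }
    exact (main_case (beta_nat (S (S m))) tau HB H).
Qed.
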